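(* Let $m,n\ge 1$ and let $\lambda\subseteq\nu$ be partitions contained in the rectangle $(n-1)^{m-1}$. Then $\mathrm{PASM}(\nu/\lambda,m,n)$ is exactly the set of real $m\times n$ matrices $X=(X_{ij})$ satisfying all of the following: (1) $0\le \sum_{i'=1}^{i} X_{i'j}\le 1$ for all $1\le i\le m$, $1\le j\le n$; (2) $0\le \sum_{j'=1}^{j} X_{ij'}\le 1$ for all $1\le i\le m$, $1\le j\le n$; (3) $\sum_{i=1}^{m} X_{i1}=1$ and $\sum_{j=1}^{n} X_{1j}=1$; (4) $\sum_{j=1}^{n} X_{ij}=0$ for $2\le i\le m$, and $\sum_{i=1}^{m} X_{ij}=0$ for $2\le j\le n$; (5) $X_{ij}=0$ whenever $j\le\lambda_i$; (6) $X_{ij}=0$ whenever $i>1$ and $\nu_{i-1}+1<j\le n$, and $X_{1j}=0$ whenever $\nu_1+1<j\le n$.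
   Context: A partition $\mu=(\mu_1\ge\mu_2\ge\cdots)$ is a weakly decreasing sequence of nonnegative integers with finitely many nonzero terms; $\ell(\mu)$ denotes its number of positive parts. We identify $\mu$ with the set of matrix positions $\{(i,j): i\ge1,\ 1\le j\le\mu_i\}$. We write $\mu\subseteq\nu$ if $\mu_i\le\nu_i$ for all $i$, and $\mu\subseteq a^b$ (the $b\times a$ rectangle) if $\ell(\mu)\le b$ and $\mu_1\le a$. For a partition $\mu\subseteq(n-1)^{m-1}$, the $m\times n$ matrix $M^\mu=M^\mu(m,n)$ has entries: $M^\mu_{1,\mu_1+1}=1$; for each $1\le k\le m-1$ with $\mu_k>\mu_{k+1}$, $M^\mu_{k+1,\mu_{k+1}+1}=1$ and $M^\mu_{k+1,\mu_k+1}=-1$; all other entries are $0$. For partitions $\lambda\subseteq\nu\subseteq(n-1)^{m-1}$, $\mathrm{PASM}(\nu/\lambda,m,n)$ is the convex hull in $\mathbb{R}^{mn}$ of the matrices $M^\mu(m,n)$ over all partitions $\mu$ with $\lambda\subseteq\mu\subseteq\nu$. *)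

(* Defs.v *)
From HB Require Import structures.
From mathcomp Require Import all_boot all_order all_algebra.
From mathcomp Require Import reals.
Set Implicit Arguments. Unset Strict Implicit. Unset Printing Implicit Defensive.
Import Order.TTheory GRing.Theory Num.Theory.
Local Open Scope ring_scope.

(* Partitions are represented 0-indexed: mu : nat -> nat with  mu i = mu_{i+1}. *)
Definition is_partition (mu : nat -> nat) : Prop :=
  (forall i, (mu i.+1 <= mu i)%N) /\ exists N, forall i, (N <= i)%N -> mu i = 0%N.

Definition part_sub (mu nu : nat -> nat) : Prop := forall i, (mu i <= nu i)%N.

(* mu \subseteq a^b  (b x a rectangle): l(mu) <= b and mu_1 <= a *)
Definition in_rect (a b : nat) (mu : nat -> nat) : Prop :=
  (forall i, (b <= i)%N -> mu i = 0%N) /\ (mu 0 <= a)%N.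

(* The matrix M^mu(m,n), 0-indexed: row 0 has a 1 in column mu_1 (0-indexed);
   for k >= 1 (0-indexed row k = paper's row k+1), if mu_k > mu_{k+1}
   (i.e. mu (k-1) > mu k) then entry (k, mu k) is 1 and entry (k, mu (k-1)) is -1. *)
Definition Mmu (R : pzRingType) (m n : nat) (mu : nat -> nat) : 'M[R]_(m, n) :=
  \matrix_(i < m, j < n)
    if (i : nat) == 0%N then ((j : nat) == mu 0%N)%:R
    else if (mu i.-1 > mu i)%N
         then ((j : nat) == mu i)%:R - ((j : nat) == mu i.-1)%:R
         else 0.

Definition conv_hull (R : realType) (V : lmodType R) (S : V -> Prop) (x : V) : Prop :=
  exists (k : nat) (w : 'I_k -> R) (p : 'I_k -> V),
    [/\ forall t, 0 <= w t, \sum_t w t = 1, forall t, S (p t)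
      & x = \sum_t w t *: p t].

Definition PASM (R : realType) (lam nu : nat -> nat) (m n : nat) : 'M[R]_(m, n) -> Prop :=
  conv_hull (fun X : 'M[R]_(m, n) =>
    exists mu, [/\ is_partition mu, part_sub lam mu, part_sub mu nu & X = Mmu R m n mu]).

Definition PASM_ineq (R : realType) (lam nu : nat -> nat) (m n : nat)
    (X : 'M[R]_(m, n)) : Prop :=
      (forall (i : 'I_m) (j : 'I_n),
        0 <= \sum_(i' < m | (i' <= i)%N) X i' j <= 1) /\
      (forall (i : 'I_m) (j : 'I_n),
        0 <= \sum_(j' < n | (j' <= j)%N) X i j' <= 1) /\
      ((forall j : 'I_n, (j : nat) = 0%N -> \sum_(i < m) X i j = 1) /\
      (forall i : 'I_m, (i : nat) = 0%N -> \sum_(j < n) X i j = 1)) /\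
      ((forall i : 'I_m, (0 < i)%N -> \sum_(j < n) X i j = 0) /\
      (forall j : 'I_n, (0 < j)%N -> \sum_(i < m) X i j = 0)) /\
      (* (5) X_{ij} = 0 when j <= lambda_i (1-indexed) *)
      (forall (i : 'I_m) (j : 'I_n), (j < lam i)%N -> X i j = 0) /\
      (* (6) X_{ij} = 0 when i > 1 and nu_{i-1}+1 < j; X_{1j} = 0 when nu_1+1 < j *)
      ((forall (i : 'I_m) (j : 'I_n), (0 < i)%N -> (nu i.-1 < j)%N -> X i j = 0) /\
      (forall (i : 'I_m) (j : 'I_n), (i : nat) = 0%N -> (nu 0%N < j)%N -> X i j = 0)).

(* Main.v *)
Require Import Defs.
From HB Require Import structures.
From mathcomp Require Import all_boot all_order all_algebra.
From mathcomp Require Import reals.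
From mathcomp Require Import zify.
From mathcomp Require Import lra.
Set Implicit Arguments. Unset Strict Implicit. Unset Printing Implicit Defensive.
Import Order.TTheory GRing.Theory Num.Theory.
Local Open Scope ring_scope.

Section Generic.
Variable R : realType.

Lemma sum_ind (N a : nat) : \sum_(0 <= k < N) ((k == a)%:R : R) = (a < N)%:R.
Proof.
elim: N => [|N IH]; first by rewrite big_geq.
rewrite big_nat_recr //= IH ltnS.
by case: (ltngtP a N) => _; rewrite /= ?addr0 ?add0r.
Qed.

Lemma sum_ge0_nat (f : nat -> R) N :
  (forall k, (k < N)%N -> 0 <= f k) -> 0 <= \sum_(0 <= k < N) f k.
Proof.
move=> h; rewrite big_seq; apply: sumr_ge0 => k; rewrite mem_index_iota.
by case/andP => _; apply: h.
Qed.

Lemma le_sum_prefix (f : nat -> R) j N :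
  (forall k, (k < N)%N -> 0 <= f k) -> (j <= N)%N ->
  \sum_(0 <= k < j) f k <= \sum_(0 <= k < N) f k.
Proof.
move=> h hj; rewrite [X in _ <= X](big_cat_nat _ (n:=j)) //= lerDl big_seq.
apply: sumr_ge0 => k; rewrite mem_index_iota => /andP[_ hk]; exact: h.
Qed.

Lemma le_sum_term (f : nat -> R) N a :
  (forall k, (k < N)%N -> 0 <= f k) -> (a < N)%N -> f a <= \sum_(0 <= k < N) f k.
Proof.
move=> h ha; apply: le_trans (le_sum_prefix h ha).
by rewrite big_nat_recr //= lerDr; apply: sum_ge0_nat => k hk; apply: h; lia.
Qed.

Lemma le_sum_two (f : nat -> R) N a b :
  (forall k, (k < N)%N -> 0 <= f k) -> (a < N)%N -> (b < N)%N -> a != b ->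
  f a + f b <= \sum_(0 <= k < N) f k.
Proof.
elim: N => [|N IH] h ha hb ab; first by [].
have h' : forall k, (k < N)%N -> 0 <= f k by move=> k hk; apply: h; lia.
rewrite big_nat_recr //=.
have [ea|na] := eqVneq a N.
  rewrite ea (addrC (f N)) lerD2r; apply: le_sum_term => //.
  by move: ab hb; rewrite ea ltnS leq_eqVlt eq_sym => /negbTE ->.
have [eb|nb] := eqVneq b N.
  rewrite eb lerD2r; apply: le_sum_term => //.
  by move: ha na; rewrite ltnS leq_eqVlt => /orP[/eqP->|//]; rewrite eqxx.
apply: le_trans (IH h' _ _ ab) _; first by move: ha na; rewrite ltnS leq_eqVlt => /orP[/eqP->|//]; rewrite eqxx.
  by move: hb nb; rewrite ltnS leq_eqVlt => /orP[/eqP->|//]; rewrite eqxx.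
by rewrite lerDl; apply: h.
Qed.

End Generic.

Section Main.
Variable R : realType.
Variables m n : nat.
Variables lam nu : nat -> nat.
Hypotheses (m0 : (0 < m)%N) (n0 : (0 < n)%N).
Hypotheses (plam : is_partition lam) (pnu : is_partition nu).
Hypotheses (lnu : part_sub lam nu).
Hypotheses (rlam : in_rect n.-1 m.-1 lam) (rnu : in_rect n.-1 m.-1 nu).

Definition Cs (x : nat -> nat -> R) i j := \sum_(0 <= k < i.+1) x k j.
Definition Rs (x : nat -> nat -> R) i j := \sum_(0 <= k < j.+1) x i k.

Record Pn (x : nat -> nat -> R) : Prop := {
  p1 : forall i j, (i < m)%N -> (j < n)%N -> 0 <= Cs x i j <= 1;
  p2 : forall i j, (i < m)%N -> (j < n)%N -> 0 <= Rs x i j <= 1;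
  p3a : \sum_(0 <= i < m) x i 0%N = 1;
  p3b : \sum_(0 <= j < n) x 0%N j = 1;
  p4a : forall i, (0 < i)%N -> (i < m)%N -> \sum_(0 <= j < n) x i j = 0;
  p4b : forall j, (0 < j)%N -> (j < n)%N -> \sum_(0 <= i < m) x i j = 0;
  p5 : forall i j, (i < m)%N -> (j < n)%N -> (j < lam i)%N -> x i j = 0;
  p6a : forall i j, (0 < i)%N -> (i < m)%N -> (j < n)%N -> (nu i.-1 < j)%N -> x i j = 0;
  p6b : forall j, (j < n)%N -> (nu 0 < j)%N -> x 0%N j = 0 }.

Definition mm (mu : nat -> nat) (i j : nat) : R :=
  if i == 0%N then (j == mu 0%N)%:R
  else if (mu i.-1 > mu i)%N then (j == mu i)%:R - (j == mu i.-1)%:R else 0.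

Definition valid mu := [/\ is_partition mu, part_sub lam mu & part_sub mu nu].

Lemma part_mono mu : is_partition mu -> forall i k, (i <= k)%N -> (mu k <= mu i)%N.
Proof.
move=> [h _] i k /subnK <-; elim: (k - i)%N => // d IH.
by rewrite addSn; exact: leq_trans (h _) IH.
Qed.

Lemma Cs_mm mu : is_partition mu -> forall i j, Cs (mm mu) i j = (j == mu i)%:R.
Proof.
move=> pm; elim=> [|i IH] j; first by rewrite /Cs big_nat1 /mm eqxx.
rewrite /Cs big_nat_recr //= -/(Cs _ i j) IH /mm /=.
case: ltnP => h; first by rewrite addrC subrK.
have e : mu i.+1 = mu i by apply/eqP; rewrite eqn_leq h (pm.1 i).
by rewrite e addr0.
Qed.

Lemma Rs_mm0 mu j : Rs (mm mu) 0 j = (mu 0%N <= j)%N%:R.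
Proof. by rewrite /Rs /mm /= sum_ind ltnS. Qed.

Lemma Rs_mmS mu i j : Rs (mm mu) i.+1 j =
  if (mu i > mu i.+1)%N then (mu i.+1 <= j)%N%:R - (mu i <= j)%N%:R else 0.
Proof.
rewrite /Rs /mm /=; case: ifP => _; last by rewrite big1.
by rewrite sumrB !sum_ind !ltnS.
Qed.

Lemma ind01 (b : bool) : 0 <= (b%:R : R) <= 1.
Proof. by case: b; rewrite /= ?lexx ?ler01. Qed.

Lemma nu_last i : (m.-1 <= i)%N -> nu i = 0%N.
Proof. by move=> h; apply: rnu.1. Qed.

Lemma Pn_mm mu : valid mu -> Pn (mm mu).
Proof.
case=> pm lm mn.
have mu_last : mu m.-1 = 0%N by have := mn m.-1; rewrite nu_last //; lia.
have mu0 : (mu 0%N <= n.-1)%N by apply: leq_trans (mn 0%N) rnu.2.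
have mub : forall i, (mu i <= n.-1)%N.
  by move=> i; apply: leq_trans mu0; apply: part_mono.
have em : m = m.-1.+1 by rewrite prednK.
have en : n = n.-1.+1 by rewrite prednK.
split.
- by move=> i j _ _; rewrite Cs_mm //; apply: ind01.
- move=> [|i] j _ _; first by rewrite Rs_mm0 ind01.
  rewrite Rs_mmS; case: ifP => h; last by rewrite lexx ler01.
  case: (leqP (mu i) j) => h2.
    have h3 : (mu i.+1 <= j)%N by apply: leq_trans (ltnW h) h2.
    by rewrite h3 subrr lexx ler01.
  by rewrite subr0 ind01.
- by rewrite em -/(Cs _ _ _) Cs_mm // mu_last.
- by rewrite en -/(Rs _ _ _) Rs_mm0 mu0.
- move=> [|i] // _ _; rewrite en -/(Rs _ _ _) Rs_mmS.
  by case: ifP => // _; rewrite !mub subrr.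
- move=> j j0 _; rewrite em -/(Cs _ _ _) Cs_mm // mu_last.
  by have -> : (j == 0%N) = false by lia.
- move=> [|i] j _ _ hj; rewrite /mm /=.
    by have -> : (j == mu 0%N) = false by (have := lm 0%N; lia).
  have h1 := lm i.+1; have h2 := pm.1 i.
  case: ifP => // _.
  have -> : (j == mu i.+1) = false by lia.
  have -> : (j == mu i) = false by lia.
  by rewrite subrr.
- move=> [|i] j // _ _ _ /= hj; rewrite /mm /=.
  have h1 := mn i; have h2 := pm.1 i.
  case: ifP => // _.
  have -> : (j == mu i.+1) = false by lia.
  have -> : (j == mu i) = false by lia.
  by rewrite subrr.
- move=> j _ hj; rewrite /mm /=.
  by have -> : (j == mu 0%N) = false by (have := mn 0%N; lia).
Qed.

Definition xf (X : 'M[R]_(m, n)) (i j : nat) : R :=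
  match (insub i : option 'I_m), (insub j : option 'I_n) with
  | Some i', Some j' => X i' j'
  | _, _ => 0
  end.

Lemma xfE X (i : 'I_m) (j : 'I_n) : xf X i j = X i j.
Proof. by rewrite /xf !valK. Qed.

Lemma xf_in X i j (hi : (i < m)%N) (hj : (j < n)%N) :
  xf X i j = X (Ordinal hi) (Ordinal hj).
Proof. by rewrite /xf (insubT (fun k => (k < m)%N) hi) (insubT (fun k => (k < n)%N) hj). Qed.

Lemma xf_out X i j : ~~ ((i < m) && (j < n))%N -> xf X i j = 0.
Proof.
rewrite negb_and => /orP[h|h]; rewrite /xf; first by rewrite insubN.
by case: (insub i) => [?|] //; rewrite insubN.
Qed.

Lemma xf_sum k (w : 'I_k -> R) (p : 'I_k -> 'M[R]_(m, n)) i j :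
  xf (\sum_t w t *: p t) i j = \sum_t w t * xf (p t) i j.
Proof.
case: (boolP ((i < m) && (j < n))%N) => [/andP[hi hj]|h].
  rewrite xf_in summxE; apply: eq_bigr => t _; by rewrite mxE xf_in.
by rewrite xf_out // big1 // => t _; rewrite xf_out // mulr0.
Qed.

Lemma xf_lin (c d : R) X Y i j :
  xf (c *: (X - d *: Y)) i j = c * (xf X i j - d * xf Y i j).
Proof.
case: (boolP ((i < m) && (j < n))%N) => [/andP[hi hj]|h].
  by rewrite !xf_in !mxE.
by rewrite !xf_out // mulr0 subr0 mulr0.
Qed.

Lemma xf_Mmu mu i j : (i < m)%N -> (j < n)%N -> xf (Mmu R m n mu) i j = mm mu i j.
Proof. by move=> hi hj; rewrite xf_in mxE. Qed.

Lemma Pn_box x y : (forall i j, (i < m)%N -> (j < n)%N -> x i j = y i j) -> Pn x -> Pn y.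
Proof.
move=> e [h1 h2 h3 h4 h5 h6 h7 h8 h9].
have eC i j : (i < m)%N -> (j < n)%N -> Cs x i j = Cs y i j.
  by move=> hi hj; apply: eq_big_nat => k /andP[_ hk]; apply: e => //; lia.
have eR i j : (i < m)%N -> (j < n)%N -> Rs x i j = Rs y i j.
  by move=> hi hj; apply: eq_big_nat => k /andP[_ hk]; apply: e => //; lia.
have eCol j : (j < n)%N -> \sum_(0 <= i < m) x i j = \sum_(0 <= i < m) y i j.
  by move=> hj; apply: eq_big_nat => k /andP[_ hk]; apply: e.
have eRow i : (i < m)%N -> \sum_(0 <= j < n) x i j = \sum_(0 <= j < n) y i j.
  by move=> hi; apply: eq_big_nat => k /andP[_ hk]; apply: e.
split.
- by move=> i j hi hj; rewrite -eC //; apply: h1.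
- by move=> i j hi hj; rewrite -eR //; apply: h2.
- by rewrite -eCol.
- by rewrite -eRow.
- by move=> i hi0 hi; rewrite -eRow //; apply: h5.
- by move=> j hj0 hj; rewrite -eCol //; apply: h6.
- by move=> i j hi hj hl; rewrite -e //; apply: h7.
- by move=> i j hi0 hi hj hl; rewrite -e //; apply: h8.
- by move=> j hj hl; rewrite -e //; apply: h9.
Qed.

Lemma sum_ord_le (F : nat -> R) i : (i < m)%N ->
  \sum_(i' < m | (i' <= i)%N) F i' = \sum_(0 <= k < i.+1) F k.
Proof.
move=> hi; rewrite (big_nat_widen 0 i.+1 m) // -(big_mkord (fun i' => (i' <= i)%N)).
by apply: eq_bigl => k.
Qed.

Lemma sum_ord_le' (F : nat -> R) j : (j < n)%N ->
  \sum_(j' < n | (j' <= j)%N) F j' = \sum_(0 <= k < j.+1) F k.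
Proof.
move=> hj; rewrite (big_nat_widen 0 j.+1 n) // -(big_mkord (fun i' => (i' <= j)%N)).
by apply: eq_bigl => k.
Qed.

Lemma ineq_Pn (X : 'M[R]_(m, n)) : PASM_ineq lam nu X <-> Pn (xf X).
Proof.
have eC (i : 'I_m) (j : 'I_n) :
    \sum_(i' < m | (i' <= i)%N) X i' j = Cs (xf X) i j.
  rewrite /Cs -sum_ord_le //; apply: eq_bigr => k _; by rewrite xfE.
have eR (i : 'I_m) (j : 'I_n) :
    \sum_(j' < n | (j' <= j)%N) X i j' = Rs (xf X) i j.
  rewrite /Rs -sum_ord_le' //; apply: eq_bigr => k _; by rewrite xfE.
have eCol (j : 'I_n) : \sum_(i < m) X i j = \sum_(0 <= i < m) xf X i j.
  by rewrite big_mkord; apply: eq_bigr => k _; rewrite xfE.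
have eRow (i : 'I_m) : \sum_(j < n) X i j = \sum_(0 <= j < n) xf X i j.
  by rewrite big_mkord; apply: eq_bigr => k _; rewrite xfE.
split.
- move=> [h1 [h2 [[h3a h3b] [[h4a h4b] [h5 [h6a h6b]]]]]]; split.
  + by move=> i j hi hj; have := h1 (Ordinal hi) (Ordinal hj); rewrite eC.
  + by move=> i j hi hj; have := h2 (Ordinal hi) (Ordinal hj); rewrite eR.
  + by have := h3a (Ordinal n0) erefl; rewrite eCol.
  + by have := h3b (Ordinal m0) erefl; rewrite eRow.
  + by move=> i i0 hi; have := h4a (Ordinal hi) i0; rewrite eRow.
  + by move=> j j0 hj; have := h4b (Ordinal hj) j0; rewrite eCol.
  + move=> i j hi hj hl; have := h5 (Ordinal hi) (Ordinal hj) hl.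
    by rewrite -(xfE X (Ordinal hi) (Ordinal hj)).
  + move=> i j i0 hi hj hl; have := h6a (Ordinal hi) (Ordinal hj) i0 hl.
    by rewrite -(xfE X (Ordinal hi) (Ordinal hj)).
  + move=> j hj hl; have := h6b (Ordinal m0) (Ordinal hj) erefl hl.
    by rewrite -(xfE X (Ordinal m0) (Ordinal hj)).
- move=> [h1 h2 h3a h3b h4a h4b h5 h6a h6b].
  split; first by move=> i j; rewrite eC; apply: h1.
  split; first by move=> i j; rewrite eR; apply: h2.
  split; first split.
    by move=> j j0; rewrite eCol; move: h3a; rewrite -j0.
    by move=> i i0; rewrite eRow; move: h3b; rewrite -i0.
  split; first split.
    by move=> i i0; rewrite eRow; apply: h4a.
    by move=> j j0; rewrite eCol; apply: h4b.
  split; first by move=> i j hl; rewrite -xfE; apply: h5.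
  split; first by move=> i j i0 hl; rewrite -xfE; apply: h6a.
  by move=> i j i0 hl; rewrite -xfE i0; apply: h6b.
Qed.

Lemma cvx01 k (w : 'I_k -> R) (v : 'I_k -> R) :
  (forall t, 0 <= w t) -> \sum_t w t = 1 -> (forall t, 0 <= v t <= 1) ->
  0 <= \sum_t w t * v t <= 1.
Proof.
move=> hw sw hv; apply/andP; split.
  by apply: sumr_ge0 => t _; apply: mulr_ge0 => //; case/andP: (hv t).
rewrite -sw; apply: ler_sum => t _; rewrite -[X in _ <= X]mulr1.
by apply: ler_wpM2l => //; case/andP: (hv t).
Qed.

Lemma cvxc k (w : 'I_k -> R) (v : 'I_k -> R) c :
  \sum_t w t = 1 -> (forall t, v t = c) -> \sum_t w t * v t = c.
Proof.
move=> sw hv; under eq_bigr do rewrite hv.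
by rewrite -mulr_suml sw mul1r.
Qed.

Lemma sum_swap k (w : 'I_k -> R) (F : 'I_k -> nat -> R) a b :
  \sum_(a <= q < b) \sum_t w t * F t q = \sum_t w t * \sum_(a <= q < b) F t q.
Proof. by rewrite exchange_big; apply: eq_bigr => t _; rewrite mulr_sumr. Qed.

Lemma Pn_conv k (w : 'I_k -> R) (y : 'I_k -> nat -> nat -> R) :
  (forall t, 0 <= w t) -> \sum_t w t = 1 -> (forall t, Pn (y t)) ->
  Pn (fun i j => \sum_t w t * y t i j).
Proof.
move=> hw sw hy; split.
- move=> i j hi hj; rewrite /Cs (sum_swap w (fun t q => y t q j)).
  by apply: cvx01 => // t; apply: (p1 (hy t)).
- move=> i j hi hj; rewrite /Rs (sum_swap w (fun t q => y t i q)).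
  by apply: cvx01 => // t; apply: (p2 (hy t)).
- rewrite (sum_swap w (fun t q => y t q 0%N)).
  by apply: cvxc => // t; apply: (p3a (hy t)).
- rewrite (sum_swap w (fun t q => y t 0%N q)).
  by apply: cvxc => // t; apply: (p3b (hy t)).
- move=> i i0 hi; rewrite (sum_swap w (fun t q => y t i q)).
  by apply: cvxc => // t; apply: (p4a (hy t)).
- move=> j j0 hj; rewrite (sum_swap w (fun t q => y t q j)).
  by apply: cvxc => // t; apply: (p4b (hy t)).
- move=> i j hi hj hl; rewrite big1 // => t _.
  by rewrite (p5 (hy t)) // mulr0.
- move=> i j i0 hi hj hl; rewrite big1 // => t _.
  by rewrite (p6a (hy t)) // mulr0.
- move=> j hj hl; rewrite big1 // => t _.
  by rewrite (p6b (hy t)) // mulr0.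
Qed.

Lemma PASM_to_ineq (X : 'M[R]_(m, n)) : PASM lam nu X -> PASM_ineq lam nu X.
Proof.
move=> [k [w [p [hw sw hp ->]]]].
apply/ineq_Pn.
apply: (@Pn_box (fun i j => \sum_t w t * xf (p t) i j)).
  by move=> i j _ _; rewrite xf_sum.
apply: Pn_conv => // t.
have [mu [vm1 vm2 vm3 ->]] := hp t.
apply: (@Pn_box (mm mu)); first by move=> i j hi hj; rewrite xf_Mmu.
exact: Pn_mm.
Qed.

Lemma Cs_S x i j : Cs x i.+1 j = Cs x i j + x i.+1 j.
Proof. by rewrite /Cs big_nat_recr. Qed.

Lemma Cs_0 x j : Cs x 0 j = x 0%N j.
Proof. by rewrite /Cs big_nat1. Qed.

Lemma Rs_CF x i j : Rs x i.+1 j = Rs (Cs x) i.+1 j - Rs (Cs x) i j.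
Proof.
rewrite /Rs -sumrB; apply: eq_bigr => k _.
by rewrite Cs_S addrAC subrr add0r.
Qed.

Lemma Rs_CF0 x j : Rs x 0 j = Rs (Cs x) 0 j.
Proof. by rewrite /Rs; apply: eq_bigr => k _; rewrite Cs_0. Qed.

Lemma lin_sum (s t : R) (f g : nat -> R) a b :
  \sum_(a <= k < b) s * (f k - t * g k) =
  s * (\sum_(a <= k < b) f k - t * \sum_(a <= k < b) g k).
Proof. by rewrite -mulr_sumr sumrB -mulr_sumr. Qed.

Section Greedy.
Variable x : nat -> nat -> R.
Hypothesis hx : Pn x.

Lemma row_sum i : (i < m)%N -> \sum_(0 <= j < n) Cs x i j = 1.
Proof.
move=> hi; rewrite /Cs exchange_big /=.
rewrite (eq_big_nat _ _ (F2 := fun k => ((k == 0%N)%:R : R))); first by rewrite sum_ind.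
move=> [|k] /andP[_ hk] /=; first exact: (p3b hx).
by apply: (p4a hx) => //; lia.
Qed.

Lemma C_ge0 i j : (i < m)%N -> (j < n)%N -> 0 <= Cs x i j.
Proof. by move=> hi hj; case/andP: (p1 hx hi hj). Qed.

Lemma C_le1 i j : (i < m)%N -> (j < n)%N -> Cs x i j <= 1.
Proof. by move=> hi hj; case/andP: (p1 hx hi hj). Qed.

Lemma C_zero i j : (i < m)%N -> (j < n)%N -> ~~ (0 < Cs x i j) -> Cs x i j = 0.
Proof.
move=> hi hj; rewrite lt0r C_ge0 // andbT => /negPn/eqP //.
Qed.

Lemma C_lo i j : (i < m)%N -> (j < n)%N -> (j < lam i)%N -> Cs x i j = 0.
Proof.
move=> hi hj hl; rewrite /Cs big_seq big1 // => k; rewrite mem_index_iota => /andP[_ hk].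
apply: (p5 hx) => //; first lia.
by apply: leq_trans hl _; apply: part_mono => //; lia.
Qed.

Lemma C_hi i j : (i < m)%N -> (j < n)%N -> (nu i < j)%N -> Cs x i j = 0.
Proof.
move=> hi hj hl.
have := p4b hx (j:=j) ltac:(lia) hj.
rewrite (big_cat_nat _ (n:=i.+1)) //= -/(Cs x i j) [X in _ + X]big_seq_cond.
rewrite [X in _ + X]big1 ?addr0 // => k; rewrite mem_index_iota andbT => /andP[hk1 hk2].
apply: (p6a hx) => //; first lia.
by apply: leq_ltn_trans hl; apply: part_mono => //; lia.
Qed.

Definition muX i := if (i < m)%N then find (fun j => 0 < Cs x i j) (iota 0 n) else 0%N.

Lemma mu_spec i : (i < m)%N ->
  [/\ (muX i < n)%N, 0 < Cs x i (muX i) & forall j, (j < muX i)%N -> Cs x i j = 0].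
Proof.
move=> hi.
have hhas : has (fun j => 0 < Cs x i j) (iota 0 n).
  apply/negPn/negP => /hasPn h0.
  have : \sum_(0 <= j < n) Cs x i j = 0.
    rewrite big_seq big1 // => j hj; apply: C_zero => //.
      by move: hj; rewrite mem_index_iota.
    by apply: h0; move: hj; rewrite /index_iota subn0.
  by rewrite row_sum // => /eqP; rewrite oner_eq0.
have hf : (find (fun j => (0 < Cs x i j)%R) (iota 0 n) < n)%N.
  by move: hhas; rewrite has_find size_iota.
rewrite /muX hi; split => //.
  by have := nth_find 0%N hhas; rewrite nth_iota.
move=> j hj; apply: C_zero => //; first lia.
by have := before_find 0%N hj; rewrite nth_iota //; [move=> -> | lia].
Qed.


Lemma mu_out i : (m <= i)%N -> muX i = 0%N.
Proof. by move=> h; rewrite /muX ltnNge h. Qed.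

Opaque muX.

Lemma F_ge0 i j : (i < m)%N -> (j < n)%N -> 0 <= Rs (Cs x) i j.
Proof. by move=> hi hj; apply: sum_ge0_nat => k hk; apply: C_ge0 => //; lia. Qed.

Lemma F_le1 i j : (i < m)%N -> (j < n)%N -> Rs (Cs x) i j <= 1.
Proof.
move=> hi hj; rewrite -(row_sum hi); apply: le_sum_prefix => // k hk.
exact: C_ge0.
Qed.

Lemma F_lo i j : (i < m)%N -> (j < muX i)%N -> Rs (Cs x) i j = 0.
Proof.
move=> hi hj; have [_ _ h] := mu_spec hi.
rewrite /Rs big_seq big1 // => k; rewrite mem_index_iota => /andP[_ hk].
apply: h; lia.
Qed.

Lemma F_hi i j : (i < m)%N -> (j < n)%N -> (muX i <= j)%N ->
  Cs x i (muX i) <= Rs (Cs x) i j.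
Proof.
move=> hi hj hmj; apply: (le_sum_term (f := Cs x i)) => // k hk.
apply: C_ge0 => //; lia.
Qed.

Lemma mu_dec i : (muX i.+1 <= muX i)%N.
Proof.
case: (ltnP i.+1 m) => hi; last by rewrite mu_out.
rewrite leqNgt; apply/negP => h.
have hi' : (i < m)%N by lia.
have [hmu hc _] := mu_spec hi'.
have := p2 hx hi hmu; rewrite Rs_CF F_lo // => /andP[h1 _].
have h2 := F_hi hi' hmu (leqnn _).
rewrite sub0r oppr_ge0 in h1.
by have := lt_le_trans hc (le_trans h2 h1); rewrite ltxx.
Qed.

Lemma mu_valid : valid muX.
Proof.
split.
- split; first exact: mu_dec.
  by exists m => i hi; rewrite mu_out.
- move=> i; case: (ltnP i m) => hi.
    rewrite leqNgt; apply/negP => h; have [hmu hc _] := mu_spec hi.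
    by rewrite (C_lo hi hmu h) ltxx in hc.
  by rewrite rlam.1 //; lia.
- move=> i; case: (ltnP i m) => hi.
    rewrite leqNgt; apply/negP => h; have [hmu hc _] := mu_spec hi.
    by rewrite (C_hi hi hmu h) ltxx in hc.
  by rewrite mu_out.
Qed.

End Greedy.

Definition SX (X : 'M[R]_(m, n)) := [set p : 'I_m * 'I_n | Cs (xf X) p.1 p.2 != 0].

Lemma Cs_ext x y i j : (i < m)%N -> (j < n)%N ->
  (forall i j, (i < m)%N -> (j < n)%N -> x i j = y i j) -> Cs x i j = Cs y i j.
Proof. by move=> hi hj e; apply: eq_big_nat => k /andP[_ hk]; apply: e => //; lia. Qed.

Lemma Rs_ext x y i j : (i < m)%N -> (j < n)%N ->
  (forall i j, (i < m)%N -> (j < n)%N -> x i j = y i j) -> Rs x i j = Rs y i j.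
Proof. by move=> hi hj e; apply: eq_big_nat => k /andP[_ hk]; apply: e => //; lia. Qed.

Lemma x_from_Cs x y : (forall i j, (i < m)%N -> (j < n)%N -> Cs x i j = Cs y i j) ->
  forall i j, (i < m)%N -> (j < n)%N -> x i j = y i j.
Proof.
move=> e [|i] j hi hj; first by rewrite -(Cs_0 x) -(Cs_0 y) e.
have := e i.+1 j hi hj; rewrite !Cs_S (e i j) //; first by move/addrI.
lia.
Qed.

Lemma scale01 (u a : R) : 0 < u -> 0 <= a <= u -> 0 <= u^-1 * a <= 1.
Proof.
move=> hu /andP[h1 h2]; apply/andP; split.
  by apply: mulr_ge0 => //; rewrite invr_ge0 ltW.
by rewrite ler_pdivrMl // mulr1.
Qed.

Lemma natrT : ((true : nat)%:R : R) = 1. Proof. by []. Qed.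
Lemma natrF : ((false : nat)%:R : R) = 0. Proof. by []. Qed.

Lemma Cs_lin (s t : R) x z i j :
  Cs (fun i j => s * (x i j - t * z i j)) i j = s * (Cs x i j - t * Cs z i j).
Proof. exact: lin_sum. Qed.

Lemma Rs_lin (s t : R) x z i j :
  Rs (fun i j => s * (x i j - t * z i j)) i j = s * (Rs x i j - t * Rs z i j).
Proof. exact: lin_sum. Qed.

Lemma step (X : 'M[R]_(m, n)) : Pn (xf X) ->
  X = Mmu R m n (muX (xf X)) \/
  exists t Y, [/\ 0 <= t <= 1, Pn (xf Y), (#|SX Y| < #|SX X|)%N &
    X = t *: Mmu R m n (muX (xf X)) + (1 - t) *: Y].
Proof.
move=> hx; set x := xf X; set mu := muX x.
have vm : valid mu := mu_valid hx.
have pm : Pn (mm mu) := Pn_mm vm.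
have pmu : is_partition mu by case: vm.
have [i0 hmin] : exists i0 : 'I_m, forall i : 'I_m, Cs x i0 (mu i0) <= Cs x i (mu i).
  have [i0 _ h] := @arg_minP _ _ _ (Ordinal m0) predT (fun i : 'I_m => Cs x i (mu i)) isT.
  by exists i0 => i; apply: h.
have hi0 := ltn_ord i0.
have cmin : forall i, (i < m)%N -> Cs x i0 (mu i0) <= Cs x i (mu i) :=
  fun i hi => hmin (Ordinal hi).
have [hmu0 c0pos _] := mu_spec hx hi0.
set t := Cs x i0 (mu i0) in cmin c0pos hmin.
have tle1 : t <= 1 by apply: (C_le1 hx hi0 hmu0).
case: (lerP 1 t) => ht.
  left; apply/matrixP => i j.
  rewrite -xfE -[Mmu _ _ _ _ i j]xfE (xf_Mmu _ (ltn_ord i) (ltn_ord j)).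
  apply: (x_from_Cs (y := mm mu)) => // i' j' hi' hj'.
  rewrite (Cs_mm pmu).
  have [hmu hc _] := mu_spec hx hi'.
  have hc1 := cmin i' hi'.
  have c1 : Cs x i' (mu i') = 1.
    by apply/le_anti; rewrite (C_le1 hx hi' hmu) /= (le_trans ht).
  case: (eqVneq j' (mu i')) => [->|ne]; first by rewrite c1.
  have := le_sum_two (f := Cs x i') (N := n) (a := j') (b := mu i').
  rewrite (row_sum hx hi') c1 => h.
  have := h (fun k hk => C_ge0 hx hi' hk) hj' hmu ne.
  have := C_ge0 hx hi' hj'.
  move=> h1 h2 /=; apply/eqP; rewrite eq_le h1 andbT.
  by rewrite -(lerD2r 1) add0r.
right.
have t0 : 0 < 1 - t by rewrite subr_gt0.
have tn0 : 1 - t != 0 := lt0r_neq0 t0.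
set s := (1 - t)^-1.
set M := Mmu R m n mu.
exists t, (s *: (X - t *: M)).
have ey : forall i j, (i < m)%N -> (j < n)%N ->
    xf (s *: (X - t *: M)) i j = s * (x i j - t * mm mu i j).
  by move=> i j hi hj; rewrite xf_lin (xf_Mmu _ hi hj).
have hy : Pn (fun i j => s * (x i j - t * mm mu i j)).
  split.
  - move=> i j hi hj; rewrite Cs_lin (Cs_mm pmu); apply: scale01 => //.
    have [hmu hc _] := mu_spec hx hi.
    have h3 := cmin i hi; have h2 := C_le1 hx hi hj; have h1 := C_ge0 hx hi hj.
    case: (eqVneq j (mu i)) => [e|ne] /=.
      rewrite e mulr1n mulr1; rewrite e in h1 h2; apply/andP; split; lra.
    rewrite mulr0n mulr0 subr0.
    have := le_sum_two (f := Cs x i) (N := n) (a := j) (b := mu i).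
    rewrite (row_sum hx hi) => h.
    have := h (fun k hk => C_ge0 hx hi hk) hj hmu ne.
    move=> h4; apply/andP; split; lra.
  - move=> i j hi hj; rewrite Rs_lin; apply: scale01 => //.
    case: i hi => [|i'] hi.
      rewrite Rs_mm0 Rs_CF0; have h3 := F_le1 hx hi hj.
      case: (leqP (mu 0%N) j) => h /=.
        have h1 := F_hi hx hi hj h; have h2 := cmin 0%N hi.
        rewrite mulr1n mulr1; apply/andP; split; lra.
      rewrite (F_lo hx hi h) mulr0n mulr0 subr0 lexx /=; lra.
    have hi' : (i' < m)%N by lia.
    have md : (mu i'.+1 <= mu i')%N := mu_dec hx i'.
    rewrite Rs_mmS Rs_CF.
    case: (ltnP j (mu i'.+1)) => h1.
      have h2 : (j < mu i')%N by lia.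
      rewrite (F_lo hx hi h1) (F_lo hx hi' h2).
      have -> : (mu i' <= j)%N = false by lia.
      by case: ifP => _; rewrite /= ?mulr0n ?subrr ?mulr0 ?subr0 lexx /=; lra.
    case: (ltnP j (mu i')) => h2.
      rewrite (F_lo hx hi' h2).
      have -> : (mu i'.+1 < mu i')%N by lia.
      have h3 := F_hi hx hi hj h1; have h4 := cmin i'.+1 hi; have h5 := F_le1 hx hi hj.
      rewrite natrT natrF !subr0 mulr1; apply/andP; split; lra.
    have h3 := F_hi hx hi' hj h2; have h4 := cmin i' hi'; have h5 := F_le1 hx hi hj.
    have := p2 hx hi hj; rewrite Rs_CF => /andP[h6 h7].
    case: ifP => _.
      rewrite natrT subrr mulr0 subr0; apply/andP; split; lra.
    rewrite mulr0 subr0; apply/andP; split; lra.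
  - by rewrite lin_sum (p3a hx) (p3a pm) mulr1 mulVf.
  - by rewrite lin_sum (p3b hx) (p3b pm) mulr1 mulVf.
  - move=> i i0' hi.
    by rewrite lin_sum (p4a hx i0' hi) (p4a pm i0' hi) mulr0 subr0 mulr0.
  - move=> j j0 hj.
    by rewrite lin_sum (p4b hx j0 hj) (p4b pm j0 hj) mulr0 subr0 mulr0.
  - move=> i j hi hj hl.
    by rewrite /= (p5 hx hi hj hl : x i j = 0) (p5 pm hi hj hl) mulr0 subr0 mulr0.
  - move=> i j i0' hi hj hl.
    by rewrite /= (p6a hx i0' hi hj hl : x i j = 0) (p6a pm i0' hi hj hl) mulr0 subr0 mulr0.
  - move=> j hj hl.
    by rewrite /= (p6b hx hj hl : x 0%N j = 0) (p6b pm hj hl) mulr0 subr0 mulr0.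
have CsY : forall i j, (i < m)%N -> (j < n)%N ->
    Cs (xf (s *: (X - t *: M))) i j = s * (Cs x i j - t * (j == mu i)%:R).
  by move=> i j hi hj; rewrite (Cs_ext hi hj ey) Cs_lin (Cs_mm pmu).
split.
- by rewrite (ltW c0pos) tle1.
- by apply: Pn_box hy => i j hi hj; rewrite ey.
- apply: proper_card; apply/properP; split.
    apply/subsetP => -[i j]; rewrite !inE /=; apply: contraNN => /eqP h0.
    rewrite (CsY _ _ (ltn_ord i) (ltn_ord j)).
    have hc : 0 < Cs x i (mu i) by case: (mu_spec hx (ltn_ord i)).
    have h0' : Cs x i j = 0 by [].
    have ne : (j : nat) != mu i by apply/eqP => e; rewrite -e h0' ltxx in hc.
    by rewrite h0' (negbTE ne) natrF mulr0 subr0 mulr0.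
  exists (i0, Ordinal hmu0).
    by rewrite inE /= -/x gt_eqF.
  rewrite inE /= (CsY _ _ hi0 hmu0) -/x eqxx mulr1n mulr1 -/t subrr mulr0.
  by rewrite eqxx.
- by rewrite scalerA /s mulfV // scale1r addrC subrK.
Qed.

Lemma conv_mix (P : 'M[R]_(m, n) -> Prop) M Y (t : R) :
  conv_hull P Y -> P M -> 0 <= t <= 1 -> conv_hull P (t *: M + (1 - t) *: Y).
Proof.
move=> [k [w [p [hw sw hp ->]]]] hM /andP[t0 t1].
exists k.+1, (fun q : 'I_k.+1 => if unlift ord0 q is Some q' then (1 - t) * w q' else t),
  (fun q : 'I_k.+1 => if unlift ord0 q is Some q' then p q' else M).
split.
- move=> q; case: (unlift ord0 q) => [q'|] //; apply: mulr_ge0 => //.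
  by rewrite subr_ge0.
- rewrite big_ord_recl /= unlift_none.
  under eq_bigr do rewrite liftK.
  by rewrite -mulr_sumr sw mulr1 addrC subrK.
- by move=> q; case: (unlift ord0 q) => [q'|].
- rewrite big_ord_recl /= unlift_none.
  under [X in _ = _ + X]eq_bigr do rewrite liftK.
  congr (_ + _); rewrite scaler_sumr; apply: eq_bigr => q _.
  by rewrite scalerA.
Qed.

Lemma PASM_vertex mu : valid mu -> PASM lam nu (Mmu R m n mu).
Proof.
move=> [h1 h2 h3].
exists 1%N, (fun _ => 1), (fun _ => Mmu R m n mu); split.
- by move=> _; apply: ler01.
- by rewrite big_ord1.
- by move=> _; exists mu.
- by rewrite big_ord1 scale1r.
Qed.

Lemma ind_PASM N : forall X : 'M[R]_(m, n), Pn (xf X) -> (#|SX X| <= N)%N ->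
  PASM lam nu X.
Proof.
elim: N => [|N IH] X hx hN; have vm := mu_valid hx;
  (case: (step hx) => [eX | [t [Y [ht hY hc eX]]]]);
  move: eX vm; set mu := muX (xf X) => eX vm.
- by rewrite eX; apply: PASM_vertex.
- exfalso; lia.
- by rewrite eX; apply: PASM_vertex.
- rewrite eX; apply: conv_mix => //.
    by apply: IH => //; lia.
  by exists mu; case: vm => h1 h2 h3; split.
Qed.

End Main.

Unset Implicit Arguments.

Theorem theorem1 (R : realType) (m n : nat) (lam nu : nat -> nat) :
  (0 < m)%N -> (0 < n)%N ->
  is_partition lam -> is_partition nu ->
  part_sub lam nu ->
  in_rect n.-1 m.-1 lam -> in_rect n.-1 m.-1 nu ->
  forall X : 'M[R]_(m, n), PASM lam nu X <-> PASM_ineq lam nu X.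
Proof.
move=> m0 n0 plam pnu lnu rlam rnu X; split.
  by apply: PASM_to_ineq.
move=> h; apply: (@ind_PASM R m n lam nu m0 n0 plam pnu rlam rnu #|SX X|) => //.
by apply/ineq_Pn.
Qed.
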